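(* Define the relation $\succeq^4$ on $\mathcal{A}$ by $\mathbf{A}\succeq^4\mathbf{B}\iff\lambda(\mathbf{A})\le\lambda(\mathbf{B})$, where for $\mathbf{A}=[a_{ij}]$ of size $n$, $\lambda(\mathbf{A})=\max_{1\le i<j<k\le n}\max\{a_{jk}/a_{ik},\ a_{ik}/a_{jk}\}$. Then $\succeq^4$ is an inconsistency ranking that satisfies PR, IIP, HTE, MON and RED, but does not satisfy SI.
   Context: A pairwise comparison matrix of size $n$ is a matrix $\mathbf{A}=[a_{ij}]\in\mathbb{R}^{n\times n}$ with all entries positive and $a_{ji}=1/a_{ij}$ for all $i,j$. Let $\mathcal{A}$ denote the set of all pairwise comparison matrices of all sizes $n\ge 3$. For $\mathbf{A}\in\mathcal{A}$ of size $n$ and $3\le m\le n$, a submatrix of $\mathbf{A}$ is a matrix $\mathbf{B}=[b_{ij}]$ of size $m$ with $b_{ij}=a_{\sigma(i)\sigma(j)}$ for some strictly increasing map $\sigma:\{1,\dots,m\}\to\{1,\dots,n\}$. A triad is a pairwise comparison matrix of size $3$; a triad of $\mathbf{A}$ is a submatrix of $\mathbf{A}$ of size $3$ (when $n=3$, $\mathbf{A}$ is its own unique triad). A triad $\mathbf{T}$ is written $\mathbf{T}=(t_1;t_2;t_3)$, meaning $t_{12}=t_1$, $t_{13}=t_2$, $t_{23}=t_3$ (the remaining entries are determined by reciprocity); $\mathbf{T}^\top$ denotes its transpose, i.e. the triad $(1/t_1;1/t_2;1/t_3)$. An inconsistency ranking is a complete and transitive binary relation $\succeq$ on $\mathcal{A}$;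 $\mathbf{A}\sim\mathbf{B}$ means $\mathbf{A}\succeq\mathbf{B}$ and $\mathbf{B}\succeq\mathbf{A}$; $\mathbf{A}\preceq\mathbf{B}$ means $\mathbf{B}\succeq\mathbf{A}$. Properties of an inconsistency ranking $\succeq$: (PR) for all $s_2,t_2\ge 1$: $(1;s_2;1)\succeq(1;t_2;1)\iff s_2\le t_2$. (IIP) $\mathbf{T}\sim\mathbf{T}^\top$ for every triad $\mathbf{T}$. (HTE) $(1;t_2;t_3)\sim(1;t_2/t_3;1)$ for all $t_2,t_3>0$. (SI) $(t_1;t_2;t_3)\sim(kt_1;k^2t_2;kt_3)$ for all $t_1,t_2,t_3>0$ and all $k>0$. (MON) $\mathbf{A}\preceq\mathbf{T}$ for every $\mathbf{A}\in\mathcal{A}$ and every triad $\mathbf{T}$ of $\mathbf{A}$. (RED) every $\mathbf{A}\in\mathcal{A}$ has a triad $\mathbf{T}$ with $\mathbf{A}\sim\mathbf{T}$. *)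

(* Defs.v *)
From Stdlib Require Import Reals Lra Lia List.
Import ListNotations.
Open Scope R_scope.

(* A pairwise comparison matrix of size n >= 3; indices are 0-based
   (i, j < n).  Entries outside the range are irrelevant. *)
Record PCM := {
  pc_n : nat;
  pc_a : nat -> nat -> R;
  pc_size : (3 <= pc_n)%nat;
  pc_pos : forall i j, (i < pc_n)%nat -> (j < pc_n)%nat -> 0 < pc_a i j;
  pc_rec : forall i j, (i < pc_n)%nat -> (j < pc_n)%nat -> pc_a j i = / pc_a i j
}.

Definition is_submatrix (B A : PCM) : Prop :=
  exists sigma : nat -> nat,
    (forall i j, (i < j)%nat -> (j < pc_n B)%nat -> (sigma i < sigma j)%nat) /\
    (forall i, (i < pc_n B)%nat -> (sigma i < pc_n A)%nat) /\
    (forall i j, (i < pc_n B)%nat -> (j < pc_n B)%nat ->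
       pc_a B i j = pc_a A (sigma i) (sigma j)).

Definition is_triad (T : PCM) : Prop := pc_n T = 3%nat.

Definition triad_of (T A : PCM) : Prop := is_triad T /\ is_submatrix T A.

(* T is the triad (t1; t2; t3): t_12 = t1, t_13 = t2, t_23 = t3 (1-based). *)
Definition triad_eq (T : PCM) (t1 t2 t3 : R) : Prop :=
  pc_n T = 3%nat /\ pc_a T 0 1 = t1 /\ pc_a T 0 2 = t2 /\ pc_a T 1 2 = t3.

Definition relation := PCM -> PCM -> Prop.

Definition sim (r : relation) (A B : PCM) : Prop := r A B /\ r B A.

Definition inconsistency_ranking (r : relation) : Prop :=
  (forall A B, r A B \/ r B A) /\
  (forall A B C, r A B -> r B C -> r A C).

Definition PR (r : relation) : Prop :=
  forall s2 t2 S T, 1 <= s2 -> 1 <= t2 ->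
    triad_eq S 1 s2 1 -> triad_eq T 1 t2 1 -> (r S T <-> s2 <= t2).

Definition IIP (r : relation) : Prop :=
  forall t1 t2 t3 T T', triad_eq T t1 t2 t3 -> triad_eq T' (/ t1) (/ t2) (/ t3) ->
    sim r T T'.

Definition HTE (r : relation) : Prop :=
  forall t2 t3 T T', 0 < t2 -> 0 < t3 ->
    triad_eq T 1 t2 t3 -> triad_eq T' 1 (t2 / t3) 1 -> sim r T T'.

Definition SI (r : relation) : Prop :=
  forall t1 t2 t3 k T T', 0 < t1 -> 0 < t2 -> 0 < t3 -> 0 < k ->
    triad_eq T t1 t2 t3 -> triad_eq T' (k * t1) (k ^ 2 * t2) (k * t3) -> sim r T T'.

(* A ⪯ T, i.e. T ⪰ A, for every triad T of A *)
Definition MON (r : relation) : Prop :=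
  forall A T, triad_of T A -> r T A.

Definition RED (r : relation) : Prop :=
  forall A, exists T, triad_of T A /\ sim r A T.

(* maximum of a list of reals (default 0 for the empty list) *)
Fixpoint Rmax_list (l : list R) : R :=
  match l with
  | [] => 0
  | x :: l' => Rmax x (Rmax_list l')
  end.

Definition triples (n : nat) : list (nat * nat * nat) :=
  flat_map (fun i =>
    flat_map (fun j =>
      map (fun k => (i, j, k)) (seq (S j) (n - S j)))
    (seq (S i) (n - S i)))
  (seq 0 n).

Definition lam (A : PCM) : R :=
  Rmax_list (map (fun '(i, j, k) =>
     Rmax (pc_a A j k / pc_a A i k) (pc_a A i k / pc_a A j k))
   (triples (pc_n A))).

Definition succ4 : relation := fun A B => lam A <= lam B.

(* Main.v *)
Require Import Defs.
From Stdlib Require Import Reals Lra Lia List.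
Import ListNotations.
Open Scope R_scope.

Lemma le_Rmax_list : forall l x, In x l -> x <= Rmax_list l.
Proof.
  induction l as [|a l IH]; simpl; intros x Hx; [contradiction|].
  destruct Hx as [<-|Hx]; [apply Rmax_l|].
  eapply Rle_trans; [apply IH; exact Hx| apply Rmax_r].
Qed.

Lemma Rmax_list_in : forall l, Rmax_list l = 0 \/ In (Rmax_list l) l.
Proof.
  induction l as [|a l IH]; simpl; [left; reflexivity|].
  unfold Rmax; destruct (Rle_dec a (Rmax_list l)).
  - destruct IH as [IH|IH]; [left; exact IH| right; right; exact IH].
  - right; left; reflexivity.
Qed.

Lemma in_triples : forall n i j k,
  (i < j)%nat -> (j < k)%nat -> (k < n)%nat -> In (i, j, k) (triples n).
Proof.
  intros n i j k H1 H2 H3. unfold triples.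
  apply in_flat_map. exists i. split; [apply in_seq; lia|].
  apply in_flat_map. exists j. split; [apply in_seq; lia|].
  apply in_map. apply in_seq; lia.
Qed.

Lemma triples_in : forall n i j k, In (i, j, k) (triples n) ->
  (i < j)%nat /\ (j < k)%nat /\ (k < n)%nat.
Proof.
  intros n i j k H. unfold triples in H.
  apply in_flat_map in H. destruct H as [i' [Hi' H]]. apply in_seq in Hi'.
  apply in_flat_map in H. destruct H as [j' [Hj' H]]. apply in_seq in Hj'.
  apply in_map_iff in H. destruct H as [k' [Heq Hk']]. apply in_seq in Hk'.
  inversion Heq; subst. lia.
Qed.

Lemma triad_lam : forall T, pc_n T = 3%nat ->
  lam T = Rmax (pc_a T 1 2 / pc_a T 0 2) (pc_a T 0 2 / pc_a T 1 2).
Proof.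
  intros T H. unfold lam. rewrite H.
  change (triples 3) with [(0,1,2)%nat]. simpl.
  apply Rmax_left.
  eapply Rle_trans; [|apply Rmax_l].
  left. apply Rdiv_lt_0_compat; apply pc_pos; lia.
Qed.

Definition s3 (i j k x : nat) : nat :=
  match x with 0%nat => i | 1%nat => j | _ => k end.

Lemma s3_lt : forall n i j k x, (i < n)%nat -> (j < n)%nat -> (k < n)%nat ->
  (s3 i j k x < n)%nat.
Proof. intros n i j k [|[|x]]; simpl; auto. Qed.

Definition sub3 (A : PCM) (i j k : nat) (Hi : (i < pc_n A)%nat)
  (Hj : (j < pc_n A)%nat) (Hk : (k < pc_n A)%nat) : PCM.
Proof.
  refine {| pc_n := 3; pc_a := fun x y => pc_a A (s3 i j k x) (s3 i j k y) |}.
  - lia.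
  - intros x y _ _. apply pc_pos; apply s3_lt; auto.
  - intros x y _ _. apply pc_rec; apply s3_lt; auto.
Defined.

Definition f3 (t1 t2 t3 : R) (x y : nat) : R :=
  match x, y with
  | O, S O => t1 | S O, O => / t1 | O, S (S O) => t2 | S (S O), O => / t2
  | S O, S (S O) => t3 | S (S O), S O => / t3 | _, _ => 1 end.

Definition mk3 (t1 t2 t3 : R) (H1 : 0 < t1) (H2 : 0 < t2) (H3 : 0 < t3) : PCM.
Proof.
  refine {| pc_n := 3; pc_a := f3 t1 t2 t3 |}.
  - lia.
  - intros x y Hx Hy.
    destruct x as [|[|[|x]]]; try lia; destruct y as [|[|[|y]]]; try lia; simpl;
      try lra; apply Rinv_0_lt_compat; assumption.
  - intros x y Hx Hy.
    destruct x as [|[|[|x]]]; try lia; destruct y as [|[|[|y]]]; try lia; simpl;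
      rewrite ?Rinv_inv, ?Rinv_1; reflexivity.
Defined.

Theorem mainTheorem5 :
  inconsistency_ranking succ4 /\ PR succ4 /\ IIP succ4 /\ HTE succ4 /\
  MON succ4 /\ RED succ4 /\ ~ SI succ4.
Proof.
  split; [|split; [|split; [|split; [|split; [|split]]]]].
  - split; unfold succ4.
    + intros A B. destruct (Rle_lt_dec (lam A) (lam B)); [left; auto | right; lra].
    + intros A B C; apply Rle_trans.
  - intros s2 t2 S T Hs Ht [HS1 [HS2 [HS3 HS4]]] [HT1 [HT2 [HT3 HT4]]].
    unfold succ4. rewrite (triad_lam S HS1), (triad_lam T HT1).
    rewrite HS3, HS4, HT3, HT4.
    assert (E : forall x, 1 <= x -> Rmax (1 / x) (x / 1) = x).
    { intros x Hx. rewrite Rmax_right.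
      - field; lra.
      - unfold Rdiv. rewrite Rinv_1, Rmult_1_r, Rmult_1_l.
        apply Rle_trans with 1; [|exact Hx].
        rewrite <- Rinv_1. apply Rinv_le_contravar; lra. }
    rewrite E, E by assumption. tauto.
  - intros t1 t2 t3 T T' [H1 [H2 [H3 H4]]] [H1' [H2' [H3' H4']]].
    unfold sim, succ4. rewrite (triad_lam T H1), (triad_lam T' H1').
    rewrite H3, H4, H3', H4'.
    assert (P2 : 0 < t2) by (rewrite <- H3; apply pc_pos; lia).
    assert (P3 : 0 < t3) by (rewrite <- H4; apply pc_pos; lia).
    replace (/ t3 / / t2) with (t2 / t3) by (field; lra).
    replace (/ t2 / / t3) with (t3 / t2) by (field; lra).
    rewrite Rmax_comm. split; apply Rle_refl.
  - intros t2 t3 T T' P2 P3 [H1 [H2 [H3 H4]]] [H1' [H2' [H3' H4']]].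
    unfold sim, succ4. rewrite (triad_lam T H1), (triad_lam T' H1').
    rewrite H3, H4, H3', H4'.
    replace (1 / (t2 / t3)) with (t3 / t2) by (field; lra).
    replace (t2 / t3 / 1) with (t2 / t3) by (field; lra).
    split; apply Rle_refl.
  - intros A T [HT [sg [Hinc [Hlt Heq]]]]. unfold succ4.
    rewrite (triad_lam T HT).
    rewrite !Heq by (rewrite HT; lia).
    unfold lam. apply le_Rmax_list.
    apply in_map_iff. exists (sg 0%nat, sg 1%nat, sg 2%nat). split; [reflexivity|].
    apply in_triples; [apply Hinc; rewrite ?HT; lia | apply Hinc; rewrite ?HT; lia | apply Hlt; rewrite ?HT; lia].
  - intros A.
    set (f := fun '(i, j, k) =>
     Rmax (pc_a A j k / pc_a A i k) (pc_a A i k / pc_a A j k)).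
    assert (Hl : lam A = Rmax_list (map f (triples (pc_n A)))) by reflexivity.
    assert (Hpos : 0 < lam A).
    { apply Rlt_le_trans with (f (0, 1, 2)%nat).
      - unfold f. eapply Rlt_le_trans; [|apply Rmax_l].
        pose proof (pc_size A).
        apply Rdiv_lt_0_compat; apply pc_pos; lia.
      - rewrite Hl. apply le_Rmax_list. apply in_map.
        pose proof (pc_size A). apply in_triples; lia. }
    destruct (Rmax_list_in (map f (triples (pc_n A)))) as [E|E];
      [rewrite <- Hl in E; lra|].
    rewrite <- Hl in E. apply in_map_iff in E.
    destruct E as [[[i j] k] [Ef Hin]].
    destruct (triples_in _ _ _ _ Hin) as [Hij [Hjk Hkn]].
    assert (Hi : (i < pc_n A)%nat) by lia.
    assert (Hj : (j < pc_n A)%nat) by lia.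
    exists (sub3 A i j k Hi Hj Hkn). split.
    + split; [reflexivity|].
      exists (s3 i j k). split; [|split].
      * intros x y Hxy Hy. simpl in Hy.
        destruct x as [|[|x]]; destruct y as [|[|y]]; simpl; lia.
      * intros x _. apply s3_lt; auto.
      * intros x y _ _. reflexivity.
    + unfold sim, succ4. rewrite (triad_lam (sub3 A i j k Hi Hj Hkn) eq_refl).
      simpl. unfold f in Ef. rewrite Ef. split; apply Rle_refl.
  - intros HSI.
    assert (P1 : 0 < 1) by lra. assert (P2 : 0 < 2) by lra.
    assert (P21 : 0 < 2 * 1) by lra. assert (P41 : 0 < 2 ^ 2 * 1) by lra.
    destruct (HSI 1 1 1 2 (mk3 1 1 1 P1 P1 P1) (mk3 (2*1) (2^2*1) (2*1) P21 P41 P21)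
      P1 P1 P1 P2) as [_ H].
    + repeat split.
    + repeat split.
    + unfold succ4 in H.
      rewrite (triad_lam (mk3 (2*1) (2^2*1) (2*1) P21 P41 P21) eq_refl), (triad_lam (mk3 1 1 1 P1 P1 P1) eq_refl) in H.
      simpl in H.
      assert (E1 : Rmax (1 / 1) (1 / 1) = 1) by (rewrite Rmax_left; lra).
      assert (E2 : 2 <= Rmax (2 * 1 / (2 * (2 * 1) * 1)) (2 * (2 * 1) * 1 / (2 * 1))).
      { eapply Rle_trans; [|apply Rmax_r]. right; field. }
      first [lra | (idtac; match type of H with ?g => idtac g end; fail)].
Qed.
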